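(* Let $P$ be a poset and $v$ an assignment of variables to elements of $P$. Then for all $m,n\in\omega$, $P,v\models\phi_{mn}(x_1,\ldots,x_m,y)$ if and only if $\exists$ has an $n$-strategy for the game with starting position $(\{v(x_1),\ldots,v(x_m)\},\{v(y)\})$.
   Context: Work in the first-order signature with one binary relation $\leq$. Let $J(x,y,z)$ be the formula $x\leq z\wedge y\leq z\wedge\forall w((x\leq w\wedge y\leq w)\to z\leq w)$ (so $z$ is the join of $x,y$), and $M(x,y,z)$ the dual formula expressing that $z$ is the meet of $x,y$. For $k\in\omega$ let $C_k(x_1,\ldots,x_k,y)$ be $\bigvee_{i=1}^k(y=x_i)$ (false when $k=0$) and $D_k=\neg C_k$. Write $\vec{x}_m=(x_1,\ldots,x_m)$. Define formulas $\phi_{mn}(\vec{x}_m,y)$ recursively: $\phi_{m0}(\vec{x}_m,y)=D_m(\vec{x}_m,y)$, and $\phi_{m(n+1)}(\vec{x}_m,y)=\forall a\forall b\forall c\Big(\big(\exists d(C_m(\vec{x}_m,d)\wedge d\leq a)\to\phi_{(m+1)n}(\vec{x}_m,a,y)\big)\wedge\big((C_m(\vec{x}_m,a)\wedge C_m(\vec{x}_m,b)\wedge M(a,b,c))\to\phi_{(m+1)n}(\vec{x}_m,c,y)\big)\wedge\big((C_m(\vec{x}_m,c)\wedge J(a,b,c))\to(\phi_{(m+1)n}(\vec{x}_m,a,y)\vee\phi_{(m+1)n}(\vec{x}_m,b,y))\big)\Big)$. The game: for a poset $P$ and $U_0,V\subseteq P$, the game with starting position $(U_0,V)$ is played between $\forall$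 and $\exists$ in rounds $0,1,2,\ldots$; a set $U$ is maintained, initially $U_0$, with $V$ fixed. Each round $\forall$ moves and $\exists$ responds: (1) if $b\geq a$ for some $a\in U$, $\forall$ may play $(b)$ and $\exists$ must add $b$ to $U$; (2) if $a,b\in U$ and $a\wedge b$ exists, $\forall$ may play $(a,b)$ and $\exists$ must add $a\wedge b$ to $U$; (3) if $a\vee b$ exists and lies in $U$, $\forall$ may play $(a,b)$ and $\exists$ must choose one of $a,b$ and add it to $U$. $\forall$ wins in round $n$ if $U\cap V\neq\emptyset$ at the beginning of round $n$. $\exists$ has an $n$-strategy if she can guarantee that $\forall$ does not win until at least round $n+1$, however $\forall$ plays. *)

(* Defs.v *)
From mathcomp Require Import all_boot all_order.
Set Implicit Arguments. Unset Strict Implicit. Unset Printing Implicit Defensive.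
Import Order.Theory.
Local Open Scope order_scope.

Inductive form : Type :=
  | FLe : nat -> nat -> form
  | FEq : nat -> nat -> form
  | FFalse : form
  | FNot : form -> form
  | FAnd : form -> form -> form
  | FOr : form -> form -> form
  | FImp : form -> form -> form
  | FAll : nat -> form -> form
  | FEx : nat -> form -> form.

Definition upd {T : Type} (v : nat -> T) (x : nat) (a : T) : nat -> T :=
  fun z => if z == x then a else v z.

Fixpoint sat {d : Order.disp_t} {P : porderType d} (v : nat -> P) (f : form)
  : Prop :=
  match f with
  | FLe x y => v x <= v y
  | FEq x y => v x = v y
  | FFalse => False
  | FNot g => ~ sat v g
  | FAnd g h => sat v g /\ sat v h
  | FOr g h => sat v g \/ sat v h
  | FImp g h => sat v g -> sat v h
  | FAll x g => forall a : P, sat (upd v x a) g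
  | FEx x g => exists a : P, sat (upd v x a) g
  end.

Definition FJ (x y z w : nat) : form :=
  FAnd (FLe x z) (FAnd (FLe y z)
    (FAll w (FImp (FAnd (FLe x w) (FLe y w)) (FLe z w)))).

Definition FM (x y z w : nat) : form :=
  FAnd (FLe z x) (FAnd (FLe z y)
    (FAll w (FImp (FAnd (FLe w x) (FLe w y)) (FLe w z)))).

Fixpoint FC (xs : seq nat) (y : nat) : form :=
  match xs with
  | [::] => FFalse
  | [:: x] => FEq y x
  | x :: xs' => FOr (FEq y x) (FC xs' y)
  end.

Definition FD (xs : seq nat) (y : nat) : form := FNot (FC xs y).

(* phi_{mn}(xs, y) with m = size xs; the bound variables a,b,c,d,w are
   chosen fresh (larger than every variable among xs, y). *)
Fixpoint phi (n : nat) (xs : seq nat) (y : nat) : form :=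
  match n with
  | 0 => FD xs y
  | n'.+1 =>
    let N := (foldr maxn y xs).+1 in
    let a := N in let b := N.+1 in let c := N.+2 in
    let dd := N.+3 in let w := N.+4 in
    FAll a (FAll b (FAll c
      (FAnd
        (FImp (FEx dd (FAnd (FC xs dd) (FLe dd a)))
              (phi n' (rcons xs a) y))
        (FAnd
          (FImp (FAnd (FAnd (FC xs a) (FC xs b)) (FM a b c w))
                (phi n' (rcons xs c) y))
          (FImp (FAnd (FC xs c) (FJ a b c w))
                (FOr (phi n' (rcons xs a) y) (phi n' (rcons xs b) y)))))))
  end.

Definition is_meet {d : Order.disp_t} {P : porderType d} (a b c : P) : Prop :=
  c <= a /\ c <= b /\ forall w : P, w <= a -> w <= b -> w <= c.

Definition is_join {d : Order.disp_t} {P : porderType d} (a b c : P) : Prop :=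
  a <= c /\ b <= c /\ forall w : P, a <= w -> b <= w -> c <= w.

(* Moves of player forall.  MMeet a b c : play (a,b) where c = a /\ b;
   MJoin a b c : play (a,b) where c = a \/ b. *)
Inductive move (T : Type) : Type :=
  | MUp : T -> move T
  | MMeet : T -> T -> T -> move T
  | MJoin : T -> T -> T -> move T.

Definition legal {d : Order.disp_t} {P : porderType d}
  (U : P -> Prop) (mv : move P) : Prop :=
  match mv with
  | MUp b => exists2 a, U a & a <= b
  | MMeet a b c => [/\ U a, U b & is_meet a b c]
  | MJoin a b c => is_join a b c /\ U c
  end.

Definition addp {T : Type} (U : T -> Prop) (x : T) : T -> Prop :=
  fun z => U z \/ z = x.

Definition step {T : Type} (U : T -> Prop) (mv : move T) (ch : bool)
  : T -> Prop :=
  match mv with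
  | MUp b => addp U b
  | MMeet _ _ c => addp U c
  | MJoin a b _ => addp U (if ch then a else b)
  end.

(* A strategy for exists: given the history of forall's previous moves and
   his current move, the choice to make. *)
Definition strategy (T : Type) := seq (move T) -> move T -> bool.

Definition disjointp {T : Type} (U V : T -> Prop) : Prop :=
  forall z, ~ (U z /\ V z).

(* safe V s hist U ms : playing the forall-moves ms (as long as they are
   legal) against strategy s from position U (history hist), the set U is
   disjoint from V at the beginning of every round reached. *)
Fixpoint safe {d : Order.disp_t} {P : porderType d} (V : P -> Prop)
  (s : strategy P) (hist : seq (move P)) (U : P -> Prop) (ms : seq (move P))
  : Prop :=
  disjointp U V /\
  match ms with
  | [::] => True
  | mv :: ms' => legal U mv ->
      safe V s (rcons hist mv) (step U mv (s hist mv)) ms'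
  end.

Definition n_strategy {d : Order.disp_t} {P : porderType d}
  (n : nat) (U0 V : P -> Prop) (s : strategy P) : Prop :=
  forall ms : seq (move P), size ms <= n -> safe V s [::] U0 ms.

Definition has_n_strategy {d : Order.disp_t} {P : porderType d}
  (n : nat) (U0 V : P -> Prop) : Prop :=
  exists s : strategy P, n_strategy n U0 V s.

(* Main.v *)
Require Import Defs.
From mathcomp Require Import all_boot all_order zify.
From Stdlib Require Import Classical IndefiniteDescription.
Set Implicit Arguments. Unset Strict Implicit. Unset Printing Implicit Defensive.
Import Order.Theory.
Section G.
Context {d : Order.disp_t} {P : porderType d}.

Lemma safe_shift (V : P -> Prop) (s : strategy P) h0 h U ms :
  safe V s (h0 ++ h) U ms <-> safe V (fun h' => s (h0 ++ h')) h U ms.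
Proof.
elim: ms h U => [|mv ms IH] h U /=; first by [].
rewrite rcons_cat.
split=> [[H1 H2]|[H1 H2]]; split=> // Hl; apply/IH; exact: H2.
Qed.

Lemma hns_0 (U V : P -> Prop) : has_n_strategy 0 U V <-> disjointp U V.
Proof.
split=> [[s Hs]|H]; first exact: (Hs [::] isT).1.
by exists (fun _ _ => true) => -[|] //= _.
Qed.

Lemma hns_S n (U V : P -> Prop) : has_n_strategy n.+1 U V <->
  disjointp U V /\ forall mv, legal U mv -> exists ch, has_n_strategy n (step U mv ch) V.
Proof.
split.
  move=> [s Hs]; split; first exact: (Hs [::] isT).1.
  move=> mv Hl; exists (s [::] mv); exists (fun h => s (mv :: h)) => ms Hms.
  have [_ /(_ Hl) H] := Hs (mv :: ms) Hms.
  exact: (proj1 (safe_shift V s [:: mv] [::] _ ms)).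
move=> [Hd Hm].
have Hf : forall mv, exists cs : bool * strategy P,
    legal U mv -> n_strategy n (step U mv cs.1) V cs.2.
  move=> mv; case: (classic (legal U mv)) => [Hl|Hn].
    by have [ch [s Hs]] := Hm mv Hl; exists (ch, s).
  by exists (true, fun _ _ => true).
pose f mv := proj1_sig (constructive_indefinite_description _ (Hf mv)).
have Hfs : forall mv, legal U mv -> n_strategy n (step U mv (f mv).1) V (f mv).2.
  move=> mv; exact: (proj2_sig (constructive_indefinite_description _ (Hf mv))).
exists (fun h mv => match h with [::] => (f mv).1 | mv0 :: h' => (f mv0).2 h' mv end).
move=> [|mv ms] Hms; split=> // Hl.
apply: (proj2 (safe_shift V _ [:: mv] [::] _ ms)).
exact: Hfs.
Qed.

Lemma hns_disj n (U V : P -> Prop) : has_n_strategy n U V -> disjointp U V.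
Proof. case: n => [H|n H]; [exact/hns_0 | exact: (proj1 (proj1 (hns_S _ _ _) H))]. Qed.

Lemma hns_ext n (U U' V : P -> Prop) : (forall z, U z <-> U' z) ->
  has_n_strategy n U V -> has_n_strategy n U' V.
Proof.
elim: n U U' => [|n IH] U U' E.
  move/hns_0=> H; apply/hns_0 => z [H1 H2]; apply: (H z); split=> //; exact/E.
move/hns_S=> [Hd Hm]; apply/hns_S; split.
  move=> z [H1 H2]; apply: (Hd z); split=> //; exact/E.
have EL : forall mv, legal U' mv -> legal U mv.
  case=> [b|a b c|a b c] /=.
  - by case=> a Ha Hab; exists a => //; apply/E.
  - by case=> Ha Hb Hm'; split=> //; apply/E.
  - by case=> Hj Hc; split=> //; apply/E.
move=> mv /EL /Hm [ch Hch]; exists ch; apply: IH Hch.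
by case: mv => * /=; rewrite /addp; split=> -[H|H]; (try by right); left; apply/E.
Qed.
End G.

Section F.
Context {d : Order.disp_t} {P : porderType d}.

Lemma upd_lt (v : nat -> P) x a z : z < x -> upd v x a z = v z.
Proof. by move=> h; rewrite /upd ltn_eqF. Qed.
Lemma upd_same (v : nat -> P) x a : upd v x a x = a.
Proof. by rewrite /upd eqxx. Qed.

Lemma sat_FC_cons (v : nat -> P) x xs z :
  sat v (FC (x :: xs) z) <-> v z = v x \/ sat v (FC xs z).
Proof. case: xs => [|x' xs] /=; last by []. by split=> [->|[->|[]]]; [left|]. Qed.

Lemma sat_FC (v : nat -> P) xs z :
  sat v (FC xs z) <-> exists2 x, x \in xs & v z = v x.
Proof.
elim: xs => [|x xs IH]; first by split=> // -[].
rewrite sat_FC_cons IH; split.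
  by case=> [->|[x' H1 H2]]; [exists x; rewrite ?inE ?eqxx | exists x'; rewrite // inE H1 orbT].
by case=> x'; rewrite inE => /orP [/eqP ->|H1 H2]; [left|right; exists x'].
Qed.

Lemma sat_FM (v : nat -> P) x y z w : x < w -> y < w -> z < w ->
  sat v (FM x y z w) <-> is_meet (v x) (v y) (v z).
Proof.
move=> hx hy hz; rewrite /FM /= /is_meet /upd eqxx !ltn_eqF //.
by split=> -[h1 [h2 h3]]; do 2 split=> //; move=> a; [move=> ha hb; apply: h3|case; apply: h3].
Qed.

Lemma sat_FJ (v : nat -> P) x y z w : x < w -> y < w -> z < w ->
  sat v (FJ x y z w) <-> is_join (v x) (v y) (v z).
Proof.
move=> hx hy hz; rewrite /FJ /= /is_join /upd eqxx !ltn_eqF //.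
by split=> -[h1 [h2 h3]]; do 2 split=> //; move=> a; [move=> ha hb; apply: h3|case; apply: h3].
Qed.
End F.

Section M.
Context {d : Order.disp_t} {P : porderType d}.
Definition SS (v : nat -> P) (xs : seq nat) := fun p : P => exists2 x, x \in xs & p = v x.

Lemma foldr_ub y xs : y <= foldr maxn y xs /\ forall x, x \in xs -> x <= foldr maxn y xs.
Proof.
elim: xs => [|x xs [IH1 IH2]] /=; first by [].
split; first by lia.
by move=> z; rewrite inE => /orP [/eqP ->|/IH2]; lia.
Qed.


Lemma satFC_w (w v : nat -> P) xs z : (forall x, x \in xs -> w x = v x) ->
  sat w (FC xs z) <-> SS v xs (w z).
Proof. by move=> H; rewrite sat_FC /SS; split=> -[x hx ->]; exists x; rewrite ?H. Qed.

Lemma SS_rcons (w v : nat -> P) xs M : (forall x, x \in xs -> w x = v x) ->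
  forall z, SS w (rcons xs M) z <-> addp (SS v xs) (w M) z.
Proof.
move=> H z; rewrite /SS /addp; split.
  by case=> x; rewrite mem_rcons inE => /orP [/eqP ->|hx ->]; [right|left; exists x; rewrite ?H].
by case=> [[x hx ->]|->]; [exists x; rewrite ?mem_rcons ?inE ?hx ?orbT ?H | exists M; rewrite ?mem_rcons ?inE ?eqxx].
Qed.

Lemma eqsF N : ((N == N.+1) = false) * ((N == N.+2) = false) * ((N == N.+3) = false) * ((N == N.+4) = false) * ((N.+1 == N) = false) * ((N.+1 == N.+2) = false) * ((N.+1 == N.+3) = false) * ((N.+1 == N.+4) = false) * ((N.+2 == N) = false) * ((N.+2 == N.+1) = false) * ((N.+2 == N.+3) = false) * ((N.+2 == N.+4) = false) * ((N.+3 == N) = false) * ((N.+3 == N.+1) = false) * ((N.+3 == N.+2) = false) * ((N.+3 == N.+4) = false) * ((N.+4 == N) = false) * ((N.+4 == N.+1) = false) * ((N.+4 == N.+2) = false) * ((N.+4 == N.+3) = false).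
Proof. by do ! split; lia. Qed.

Lemma main n : forall xs y (v : nat -> P),
  sat v (phi n xs y) <-> has_n_strategy n (SS v xs) (fun p => p = v y).
Proof.
elim: n => [|n IH] xs y v.
  rewrite /= hns_0 sat_FC /SS /disjointp; split.
    by move=> H z [[x h1 h2] h3]; apply: H; exists x; rewrite // -h3.
  by move=> H [x h1 h2]; apply: (H (v y)); split=> //; exists x.
rewrite hns_S /=.
set N := (foldr maxn y xs).+1.
have [Ly Lx] : y < N /\ forall x, x \in xs -> x < N.
  by have [h1 h2] := foldr_ub y xs; split=> [|x /h2]; rewrite /N; lia.
rewrite /upd /= ?eqsF ?eqxx /=.
set W := fun (a a0 a1 : P) (z : nat) => if z == N.+2 then a1 else if z == N.+1 then a0 else if z == N then a else v z.
have WN : forall a b c, [/\ W a b c N = a, W a b c N.+1 = b & W a b c N.+2 = c].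
  by move=> a b c; rewrite /W /= ?eqsF ?eqxx.
have WL : forall a b c x, x < N -> W a b c x = v x.
  by move=> a b c x hx; rewrite /W !ltn_eqF //; lia.
have AGR : forall (w : nat -> P), (forall x, x < N -> w x = v x) -> forall x, x \in xs -> w x = v x.
  by move=> w Hw x /Lx /Hw.
have PH : forall (w : nat -> P) M, (forall x, x < N -> w x = v x) ->
    sat w (phi n (rcons xs M) y) <-> has_n_strategy n (addp (SS v xs) (w M)) (eq^~ (v y)).
  move=> w M Hw; rewrite IH (Hw y Ly).
  by split; apply: hns_ext => z; have := SS_rcons M (AGR w Hw) z; tauto.
have E1 : forall a b c, (exists e : P,
       sat (fun z : nat => if z == N.+3 then e else
           if z == N.+2 then c else if z == N.+1 then b else if z == N then a else v z)
         (FC xs N.+3) /\ (e <= a)%O) <-> exists2 e, SS v xs e & (e <= a)%O.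
  move=> a b c.
  have HH : forall e : P, sat (fun z : nat => if z == N.+3 then e else
           if z == N.+2 then c else if z == N.+1 then b else if z == N then a else v z)
         (FC xs N.+3) <-> SS v xs e.
    move=> e; rewrite (satFC_w (v:=v)) /= ?eqxx // => x /Lx hx; rewrite !ltn_eqF //; lia.
  by split=> [[e [/HH h1 h2]]|[e /HH h1 h2]]; exists e.
have FCW : forall a b c M, sat (W a b c) (FC xs M) <-> SS v xs (W a b c M).
  by move=> a b c M; rewrite (satFC_w (v:=v)) // => x /Lx; apply: WL.
split.
  move=> H.
  have {}H : forall a b c : P,
    [/\ (exists2 e, SS v xs e & (e <= a)%O) -> has_n_strategy n (addp (SS v xs) a) (eq^~ (v y)),
        SS v xs a /\ SS v xs b /\ is_meet a b c -> has_n_strategy n (addp (SS v xs) c) (eq^~ (v y)) &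
        SS v xs c /\ is_join a b c -> has_n_strategy n (addp (SS v xs) a) (eq^~ (v y)) \/
                                      has_n_strategy n (addp (SS v xs) b) (eq^~ (v y))].
    move=> a b c; have := H a b c.
    rewrite E1 (PH _ N (WL a b c)) (PH _ N.+1 (WL a b c)) (PH _ N.+2 (WL a b c)) !FCW; case: (WN a b c) => -> -> ->.
    case=> H1 [H2 H3]; split=> //.
      by case=> ha [hb [h1 [h2 h3]]]; apply: H2; do 3 (split=> //); move=> w [hw1 hw2]; exact: h3.
    by case=> hc [h1 [h2 h3]]; apply: H3; do 3 (split=> //); move=> w [hw1 hw2]; exact: h3.
  split.
    move=> z [[x hx ->] hy].
    have [H1 _ _] := H (v x) (v x) (v x).
    have D := hns_disj (H1 (ex_intro2 _ _ (v x) (ex_intro2 _ _ x hx erefl) (lexx _))).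
    by apply: (D (v x)); split; [right|].
  case=> [b|a b c|a b c] /=.
  - case=> a Ha Hab; exists true; have [H1 _ _] := H b b b; apply: H1; by exists a.
  - case=> Ha Hb Hm; exists true; have [_ H2 _] := H a b c; exact: H2.
  - case=> Hj Hc; have [_ _ H3] := H a b c.
    by case: (H3 (conj Hc Hj)) => h; [exists true|exists false].
move=> [Hd Hm] a b c.
rewrite E1 (PH _ N (WL a b c)) (PH _ N.+1 (WL a b c)) (PH _ N.+2 (WL a b c)) !FCW; case: (WN a b c) => -> -> ->.
split; [|split].
- by case=> e He hea; have [ch Hch] := Hm (MUp a) (ex_intro2 _ _ e He hea).
- case=> [[ha hb] [h1 [h2 h3]]].
  have [ch Hch] := Hm (MMeet a b c) (And3 ha hb (conj h1 (conj h2 (fun w hw1 hw2 => h3 w (conj hw1 hw2))))).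
  exact: Hch.
- case=> hc [h1 [h2 h3]].
  have [[|] Hch] := Hm (MJoin a b c) (conj (conj h1 (conj h2 (fun w hw1 hw2 => h3 w (conj hw1 hw2)))) hc).
  + by left.
  + by right.
Qed.
End M.

Theorem lemma4p1 (d : Order.disp_t) (P : porderType d) (v : nat -> P)
  (m n : nat) (xs : seq nat) (y : nat) :
  size xs = m ->
  (sat v (phi n xs y) <->
   has_n_strategy n (fun p : P => exists2 x, x \in xs & p = v x)
                    (fun p : P => p = v y)).
Proof. by move=> _; exact: main. Qed.
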